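(* Let $r\ge 2$ and $k\ge 2$ be integers and $n=k\cdot 2^r$. Then there exists an $r$-regular word of length $n$ over a two-letter alphabet.
   Context: For a word $u=u_1\cdots u_m$ over an alphabet $\mathcal A$ with $b$ letters and an integer $r\ge -1$, $u$ is $r$-regular if for every $k=0,1,\dots,r$ the sum $\sum_{1\le t\le m,\ u_t=c} t^k$ is the same for all letters $c\in\mathcal A$ (a letter not occurring contributes $0$). Here $b=2$. *)

(* Defs.v *)
From mathcomp Require Import all_boot.
Set Implicit Arguments. Unset Strict Implicit. Unset Printing Implicit Defensive.

Definition pos_power_sum (A : eqType) (u : seq A) (c : A) (k : nat) : nat :=
  \sum_(0 <= t < size u | nth c u t == c) t.+1 ^ k.

(* u is r-regular over the finite alphabet A, for r : nat (the case r = -1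
   is vacuous and not needed): for every k = 0..r, the power sums agree for
   all letters. *)
Definition r_regular (A : finType) (r : nat) (u : seq A) : Prop :=
  forall k, k <= r -> forall c d : A, pos_power_sum u c k = pos_power_sum u d k.

(* Main.v *)
Require Import Defs.
From mathcomp Require Import all_boot all_algebra.
From mathcomp Require Import ring zify.
Import GRing.Theory.
Local Open Scope ring_scope.

Definition sgn (b : bool) : int := if b then 1 else -1.

Fixpoint F (m : nat) (u : seq bool) (j : nat) : int :=
  match u with [::] => 0 | b :: u' => sgn b * ((m.+1)%:Z ^+ j) + F m.+1 u' j end.

Lemma F_cat m u v j : F m (u ++ v) j = F m u j + F (m + size u) v j.
Proof.
elim: u m => [|b u IH] m /=; first by rewrite add0r addn0.
by rewrite IH addnS addrA.
Qed.

Lemma F_neg m u j : F m (map negb u) j = - F m u j.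
Proof.
elim: u m => [|b u IH] m /=; first by rewrite oppr0.
by rewrite IH opprD; case: b => /=; rewrite /sgn ?mulN1r ?mul1r ?opprK.
Qed.

Lemma F_shift m a u j :
  F (m + a) u j = \sum_(i < j.+1) ('C(j, i))%:R * (a%:Z ^+ (j - i)) * F m u i.
Proof.
elim: u m => [|b u IH] m /=.
  by rewrite big1 // => i _; rewrite mulr0.
rewrite -addSn IH.
have -> : (((m.+1 + a)%N)%:Z ^+ j) = (a%:Z + (m.+1)%:Z) ^+ j by rewrite PoszD addrC.
rewrite exprDn big_distrr -big_split /=; apply: eq_bigr => i _.
by rewrite mulrDr; congr (_ + _); rewrite -mulr_natl; ring.
Qed.

Definition P (r : nat) (u : seq bool) := forall m j, (j <= r)%N -> F m u j = 0.

Lemma P0 r u : (forall j, (j <= r)%N -> F 0 u j = 0) -> P r u.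
Proof.
move=> H m j hj; rewrite -[m]add0n F_shift big1 // => i _.
by rewrite H ?mulr0 //; apply: leq_trans hj; rewrite -ltnS.
Qed.

Lemma P_cat r u v : P r u -> P r v -> P r (u ++ v).
Proof. by move=> Hu Hv m j hj; rewrite F_cat Hu // Hv // addr0. Qed.

Lemma P_double r u : P r u -> P r.+1 (u ++ map negb u).
Proof.
move=> H m j hj; rewrite F_cat F_neg F_shift big_ord_recr /= subnn expr0 binn.
rewrite big1 ?add0r; first by rewrite mulr1 mul1r subrr.
move=> i _; rewrite H ?mulr0 //.
by have := ltn_ord i; move=> hi; rewrite -ltnS; apply: leq_trans hj.
Qed.

Definition G m (u : seq bool) c k : nat :=
  \sum_(0 <= t < size u | nth c u t == c) (t.+1 + m) ^ k.

Lemma G_cons m b u c k : G m (b :: u) c k = ((if b == c then (m.+1) ^ k else 0) + G m.+1 u c k)%N.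
Proof.
rewrite /G /= big_mkcond big_nat_recl //= add1n big_mkcond; congr (_ + _)%N.
rewrite [in RHS]big_mkcond; apply: eq_bigr => t _; by rewrite addSnnS.
Qed.

Lemma F_G m u k : F m u k = (G m u true k)%:Z - (G m u false k)%:Z.
Proof.
elim: u m => [|b u IH] m; first by rewrite /G !big_geq.
rewrite /= !G_cons IH !PoszD.
case: b => /=; rewrite /sgn -!natz ?natrX; ring.
Qed.

Lemma P_reg r u : P r u -> r_regular r u.
Proof.
move=> H k hk c d.
have e : forall c, pos_power_sum u c k = G 0 u c k.
  by move=> c'; rewrite /G /pos_power_sum; apply: eq_bigr => t _; rewrite addn0.
have := H 0%N k hk; rewrite F_G => /eqP; rewrite subr_eq0 => /eqP [] E.
by rewrite !e; case: c; case: d.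
Qed.

Definition TM8 := [:: true; false; false; true; false; true; true; false].
Definition W12 := [:: true; false; true; false; false; false; true; true; true; false; true; false].

Lemma P_TM8 : P 2 TM8.
Proof. by apply: P0 => j; case: j => [|[|[|]]]. Qed.
Lemma P_W12 : P 2 W12.
Proof. by apply: P0 => j; case: j => [|[|[|]]]. Qed.

Lemma P_nil r : P r [::].
Proof. by []. Qed.

Lemma base k : (2 <= k)%N -> exists u, size u = (k * 4)%N /\ P 2 u.
Proof.
move=> hk.
have ev : forall n, exists u, size u = (n * 8)%N /\ P 2 u.
  elim=> [|n [u [su pu]]]; first by exists [::].
  exists (TM8 ++ u); split; first by rewrite size_cat su mulSn.
  exact: P_cat P_TM8 pu.
have [o|e] := boolP (odd k).
  have k3 : (3 <= k)%N by case: k hk o => [|[|[|]]].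
  have [u [su pu]] := ev ((k - 3)./2).
  exists (W12 ++ u); split; last exact: P_cat P_W12 pu.
  rewrite size_cat su /=.
  have := odd_double_half (k - 3); rewrite oddB // o /= add0n -muln2 => h.
  lia.
have [u [su pu]] := ev (k./2).
exists u; split => //; rewrite su.
have := odd_double_half k; rewrite (negbTE e) /= add0n -muln2; lia.
Qed.

Local Close Scope ring_scope.
Theorem mainTheorem11 (r k : nat) (hr : 2 <= r) (hk : 2 <= k) :
  exists u : seq bool, size u = k * 2 ^ r /\ r_regular r u.
Proof.
suff: exists u, size u = (k * 2 ^ r)%N /\ P r u.
  by case=> u [su pu]; exists u; split => //; apply: P_reg.
elim: r hr => [|r IH] //; rewrite leq_eqVlt => /orP [/eqP <-|hr].
  exact: base.
have [u [su pu]] := IH hr.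
exists (u ++ map negb u); split; last exact: P_double.
by rewrite size_cat size_map su expnS; lia.
Qed.
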